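(* Let $\hat B_n^-(x)=\sum_{\sigma\in\mathcal B_n,\ \sigma(1)<0}x^{\hat d_B(\sigma)}$. Then $$\sum_{n\ge1}\hat B_n^-(x)\frac{z^n}{n!}=\frac{\cos(z(x-1))+\sin(z(x-1))-1}{(x-1)\cos(z(x-1))-(x+1)\sin(z(x-1))}.$$
   Context: $\mathcal B_n$ is the set of signed permutations (bijections $\sigma$ of $\{\pm1,\dots,\pm n\}$ with $\sigma(-i)=-\sigma(i)$), written as words $\sigma(1)\cdots\sigma(n)$ with $\sigma(0)=0$. $\hat d_B(\sigma)$ is the number of $i\in\{0\}\cup[n-1]$ such that either $\sigma(i)<\sigma(i+1)$ and $i$ is even, or $\sigma(i)>\sigma(i+1)$ and $i$ is odd. *)

(* Defs.v *)
From HB Require Import structures.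
From mathcomp Require Import all_boot all_order all_algebra all_fingroup.
Set Implicit Arguments. Unset Strict Implicit. Unset Printing Implicit Defensive.
Import Order.TTheory GRing.Theory Num.Theory.
Local Open Scope ring_scope.

(* A signed permutation of [n] is encoded by a permutation p of 'I_n and a
   sign vector s : sigma(i+1) = (if s i then -1 else 1) * (p i + 1).
   This is a bijection with B_n (the usual encoding). *)
Definition signed_perm (n : nat) : finType :=
  ('S_n * {ffun 'I_n -> bool})%type.

Definition sp_word (n : nat) (sg : signed_perm n) : seq int :=
  [seq (if sg.2 i then - ((sg.1 i).+1%:Z) else (sg.1 i).+1%:Z) | i <- enum 'I_n].

(* sigma(j) for j = 0..n, with sigma(0) = 0 *)
Definition sp_val (n : nat) (sg : signed_perm n) (j : nat) : int :=
  nth 0 (0 :: sp_word sg) j.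

Definition dhatB (n : nat) (sg : signed_perm n) : nat :=
  count (fun i => ((sp_val sg i < sp_val sg i.+1) && ~~ odd i)
                  || ((sp_val sg i.+1 < sp_val sg i) && odd i)) (iota 0 n).

Definition Bminus (n : nat) : {poly rat} :=
  \sum_(sg : signed_perm n | sp_val sg 1 < 0) 'X^(dhatB sg).

(* Formal power series in z over Q[x], given by their coefficient sequences *)
Definition fps_mul (a b : nat -> {poly rat}) (n : nat) : {poly rat} :=
  \sum_(i < n.+1) a i * b (n - i)%N.

Definition egfBminus (n : nat) : {poly rat} :=
  if n is 0 then 0 else (n`!%:R : rat)^-1 *: Bminus n.

(* cos(z(x-1)) and sin(z(x-1)) as formal power series in z *)
Definition cos_fps (n : nat) : {poly rat} :=
  if odd n then 0 else ((-1) ^+ n./2 / n`!%:R : rat) *: ('X - 1) ^+ n.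
Definition sin_fps (n : nat) : {poly rat} :=
  if odd n then ((-1) ^+ n./2 / n`!%:R : rat) *: ('X - 1) ^+ n else 0.

Definition num_fps (n : nat) : {poly rat} :=
  cos_fps n + sin_fps n - (n == 0%N)%:R.
Definition den_fps (n : nat) : {poly rat} :=
  ('X - 1) * cos_fps n - ('X + 1) * sin_fps n.

(* Main.v *)
Require Import Defs.
From mathcomp Require Import all_boot all_order all_algebra all_fingroup.
From mathcomp Require Import ring zify.
Set Implicit Arguments. Unset Strict Implicit. Unset Printing Implicit Defensive.
Import Order.TTheory GRing.Theory Num.Theory.
Local Open Scope ring_scope.


Definition tt_ : {poly rat} := 'X - 1.
Definition qq : {poly rat} := 'X^2 + 1.

Definition Lop (f : nat -> {poly rat}) (n : nat) : {poly rat} :=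
  n.+1%:R * f n.+1 - qq * (n%:R * f n - tt_ * (f n)^`()).

Lemma dtt : tt_^`() = 1.
Proof. by rewrite /tt_ derivB derivX -polyC1 derivC subr0. Qed.

Lemma deriv_sum_ord (m : nat) (F : 'I_m -> {poly rat}) :
  (\sum_(i < m) F i)^`() = \sum_(i < m) (F i)^`().
Proof. by rewrite raddf_sum. Qed.

Lemma fps_mulDl f g h n : fps_mul (fun i => f i + g i) h n = fps_mul f h n + fps_mul g h n.
Proof. by rewrite /fps_mul -big_split; apply: eq_bigr => i _; rewrite mulrDl. Qed.

Lemma fps_mulBl f g h n : fps_mul (fun i => f i - g i) h n = fps_mul f h n - fps_mul g h n.
Proof. by rewrite /fps_mul -sumrB; apply: eq_bigr => i _; rewrite mulrBl. Qed.

Lemma fps_mulCl p f h n : fps_mul (fun i => p * f i) h n = p * fps_mul f h n.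
Proof. by rewrite /fps_mul mulr_sumr; apply: eq_bigr => i _; rewrite mulrA. Qed.

Lemma fps_mulCr p f h n : fps_mul f (fun i => p * h i) n = p * fps_mul f h n.
Proof. by rewrite /fps_mul mulr_sumr; apply: eq_bigr => i _; rewrite mulrCA. Qed.

Lemma Lop_mul f g n : Lop (fps_mul f g) n = fps_mul (Lop f) g n + fps_mul f (Lop g) n.
Proof.
have Dz : n.+1%:R * fps_mul f g n.+1 =
   \sum_(i < n.+1) (i.+1%:R * f i.+1) * g (n - i)%N +
   \sum_(i < n.+1) f i * ((n - i).+1%:R * g (n - i).+1).
  rewrite /fps_mul mulr_sumr.
  have -> : \sum_(i < n.+2) n.+1%:R * (f i * g (n.+1 - i)%N) =
     \sum_(i < n.+2) (i%:R * f i * g (n.+1 - i)%N) +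
     \sum_(i < n.+2) (f i * ((n.+1 - i)%N%:R * g (n.+1 - i)%N)).
    rewrite -big_split; apply: eq_bigr => i _.
    have hi : (i <= n.+1)%N by rewrite -ltnS.
    have e : n.+1%:R = i%:R + (n.+1 - i)%N%:R :> {poly rat} by rewrite -natrD subnKC.
    rewrite e /=; ring.
  congr (_ + _).
    by rewrite big_ord_recl /= mul0r mul0r add0r; apply: eq_bigr => i _.
  rewrite big_ord_recr /= subnn mul0r mulr0 addr0.
  by apply: eq_bigr => i _; rewrite subSn // -ltnS.
have Nz : n%:R * fps_mul f g n =
   \sum_(i < n.+1) (i%:R * f i) * g (n - i)%N +
   \sum_(i < n.+1) f i * ((n - i)%N%:R * g (n - i)%N).
  rewrite /fps_mul mulr_sumr -big_split; apply: eq_bigr => i _.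
  have hi : (i <= n)%N by rewrite -ltnS.
  have e : n%:R = i%:R + (n - i)%N%:R :> {poly rat} by rewrite -natrD subnKC.
  rewrite e /=; ring.
have Dx : (fps_mul f g n)^`() =
   \sum_(i < n.+1) (f i)^`() * g (n - i)%N + \sum_(i < n.+1) f i * (g (n - i)%N)^`().
  by rewrite /fps_mul deriv_sum_ord -big_split; apply: eq_bigr => i _; rewrite derivM.
rewrite /Lop Dz Nz Dx /fps_mul.
rewrite (_ : \sum_(i < n.+1) (i.+1%:R * f i.+1 - qq * (i%:R * f i - tt_ * (f i)^`())) * g (n - i)%N
  = \sum_(i < n.+1) (i.+1%:R * f i.+1) * g (n - i)%N - qq * (\sum_(i < n.+1) (i%:R * f i) * g (n - i)%N
     - tt_ * \sum_(i < n.+1) (f i)^`() * g (n - i)%N)); last first.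
  rewrite !mulr_sumr -sumrB mulr_sumr -sumrB; apply: eq_bigr => i _; ring.
rewrite (_ : \sum_(i < n.+1) f i * ((n - i).+1%:R * g (n - i).+1 - qq * ((n - i)%N%:R * g (n - i)%N - tt_ * (g (n - i)%N)^`()))
  = \sum_(i < n.+1) f i * ((n - i).+1%:R * g (n - i).+1) - qq * (\sum_(i < n.+1) f i * ((n - i)%N%:R * g (n - i)%N)
     - tt_ * \sum_(i < n.+1) f i * (g (n - i)%N)^`())); last first.
  rewrite !mulr_sumr -sumrB mulr_sumr -sumrB; apply: eq_bigr => i _; ring.
ring.
Qed.

Lemma half_odd n : odd n -> n.+1./2 = (n./2).+1.
Proof.
move=> h; rewrite -{1}[n](odd_double_half n) h /=.
by rewrite add0n doubleK.
Qed.
Lemma half_even n : ~~ odd n -> n.+1./2 = n./2.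
Proof.
move=> h; rewrite -{1}[n](odd_double_half n) (negbTE h) /= add0n.
by rewrite uphalf_double.
Qed.

Lemma fact_neq0 n : n`!%:R != 0 :> rat.
Proof. by rewrite pnatr_eq0 -lt0n fact_gt0. Qed.

Lemma coefS (a : rat) n : (n.+1%:R * (a / (n.+1)`!%:R)) *: ('X - 1) ^+ n.+1 =
   ((a / n`!%:R) *: ('X - 1) ^+ n) * ('X - 1) :> {poly rat}.
Proof.
rewrite -scalerAl -exprSr; congr (_ *: _).
rewrite factS natrM; field.
by rewrite fact_neq0 nat1r pnatr_eq0.
Qed.

Lemma natr_scale k (a : rat) (P : {poly rat}) : k%:R * (a *: P) = (k%:R * a) *: P.
Proof. by rewrite -scalerA scaler_nat mulr_natl. Qed.

Lemma cS n : n.+1%:R * cos_fps n.+1 = - tt_ * sin_fps n.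
Proof.
rewrite /cos_fps /sin_fps /=; case h: (odd n) => /=; last by rewrite mulr0 mulr0.
rewrite natr_scale coefS uphalf_half h add1n exprS mulN1r mulNr scaleNr /tt_.
by rewrite !mulNr mulrC.
Qed.

Lemma sS n : n.+1%:R * sin_fps n.+1 = tt_ * cos_fps n.
Proof.
rewrite /cos_fps /sin_fps /=; case h: (odd n) => /=; first by rewrite mulr0 mulr0.
by rewrite natr_scale coefS uphalf_half h add0n mulrC.
Qed.

Lemma scD (a : rat) n : n%:R * (a *: ('X - 1) ^+ n) = tt_ * (a *: ('X - 1) ^+ n)^`() :> {poly rat}.
Proof.
rewrite derivZ deriv_exp -/tt_ dtt mul1r.
case: n => [|n]; first by rewrite !mulr0n scaler0 mulr0 mul0r.
by rewrite /= mulr_natl scalerMnr -scalerAr mulrnAr -exprS.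
Qed.

Lemma cD n : n%:R * cos_fps n = tt_ * (cos_fps n)^`().
Proof. by rewrite /cos_fps; case: (odd n); [rewrite deriv0 !mulr0 | exact: scD]. Qed.

Lemma sD n : n%:R * sin_fps n = tt_ * (sin_fps n)^`().
Proof. by rewrite /sin_fps; case: (odd n); [exact: scD | rewrite deriv0 !mulr0]. Qed.

Lemma Lop_cos n : Lop cos_fps n = - tt_ * sin_fps n.
Proof. by rewrite /Lop cS cD subrr mulr0 subr0. Qed.

Lemma Lop_sin n : Lop sin_fps n = tt_ * cos_fps n.
Proof. by rewrite /Lop sS sD subrr mulr0 subr0. Qed.

Lemma Lop_ext f g n : (forall i, f i = g i) -> Lop f n = Lop g n.
Proof. by move=> h; rewrite /Lop !h. Qed.

Lemma Lop_add f g n : Lop (fun i => f i + g i) n = Lop f n + Lop g n.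
Proof. rewrite /Lop derivD; ring. Qed.

Lemma Lop_sub f g n : Lop (fun i => f i - g i) n = Lop f n - Lop g n.
Proof. rewrite /Lop derivB; ring. Qed.

Lemma Lop_scal p f n : Lop (fun i => p * f i) n = p * Lop f n + qq * tt_ * p^`() * f n.
Proof. rewrite /Lop derivM; ring. Qed.

Definition Mser (n : nat) : {poly rat} := tt_ * (cos_fps n - sin_fps n).
Definition delta (n : nat) : {poly rat} := (n == 0)%:R.

Lemma Lop_delta n : Lop delta n = 0.
Proof.
rewrite /Lop /delta /=; case: n => [|n] /=; last by rewrite !mulr0 -polyC0 derivC; ring.
by rewrite mulr0 mul0r -polyC1 derivC; ring.
Qed.

Lemma dXp1 : ('X + 1 : {poly rat})^`() = 1.
Proof. by rewrite derivD derivX -polyC1 derivC addr0. Qed.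

Lemma Lop_den n : Lop den_fps n = ('X * tt_) * den_fps n.
Proof.
rewrite (@Lop_ext _ (fun i => tt_ * cos_fps i - ('X + 1) * sin_fps i)) //.
rewrite Lop_sub Lop_scal Lop_scal Lop_cos Lop_sin dtt dXp1 /den_fps -/tt_ /qq.
rewrite (_ : 'X + 1 = tt_ + 2%:R) /tt_; [ring | ring].
Qed.

Lemma Lop_num n : Lop num_fps n = Mser n.
Proof.
rewrite (@Lop_ext _ (fun i => cos_fps i + sin_fps i - delta i)) //.
by rewrite Lop_sub Lop_add Lop_cos Lop_sin Lop_delta /Mser; ring.
Qed.

Lemma Lop_M n : Lop Mser n = ('X + 1) * Mser n + tt_ ^+ 2 * den_fps n.
Proof.
rewrite (@Lop_ext _ (fun i => tt_ * (cos_fps i - sin_fps i))) //.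
rewrite Lop_scal Lop_sub Lop_cos Lop_sin dtt /den_fps /Mser -/tt_ /qq.
rewrite (_ : 'X + 1 = tt_ + 2%:R) /tt_; [ring | ring].
Qed.

Lemma natr_poly_neq0 n : n.+1%:R != 0 :> {poly rat}.
Proof. by rewrite -polyC_natr polyC_eq0 pnatr_eq0. Qed.

Lemma Lop_zero U p : U 0%N = 0 -> (forall n, Lop U n = p * U n) -> forall n, U n = 0.
Proof.
move=> h0 hL; elim=> // n IH.
have := hL n; rewrite /Lop IH mulr0 deriv0 !mulr0 subr0 mulr0 subr0 => /eqP.
by rewrite mulf_eq0 (negbTE (natr_poly_neq0 n)) => /eqP.
Qed.

Lemma fps_mul_ext f f' g g' n : (forall i, f i = f' i) -> (forall i, g i = g' i) ->
  fps_mul f g n = fps_mul f' g' n.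
Proof. by move=> hf hg; apply: eq_bigr => i _; rewrite hf hg. Qed.

Lemma fps_mul_delta g n : fps_mul delta g n = g n.
Proof.
rewrite /fps_mul big_ord_recl /= /delta /= mul1r subn0 big1 ?addr0 // => i _.
by rewrite mul0r.
Qed.

Lemma fps_mul0 f g : fps_mul f g 0%N = f 0%N * g 0%N.
Proof. by rewrite /fps_mul big_ord1. Qed.

Lemma den0 : den_fps 0 = tt_.
Proof. by rewrite /den_fps /cos_fps /sin_fps /= expr0 fact0 divr1 scale1r !mulr0 mulr1 subr0. Qed.
Lemma num0 : num_fps 0 = 0.
Proof. by rewrite /num_fps /cos_fps /sin_fps /= expr0 fact0 divr1 scale1r addr0 subrr. Qed.
Lemma M0 : Mser 0 = tt_.
Proof. by rewrite /Mser /cos_fps /sin_fps /= expr0 fact0 divr1 scale1r subr0 mulr1. Qed.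

Lemma Lop_fps_mul_sub f g h n :
  Lop (fun i => fps_mul f g i - h i) n = fps_mul (Lop f) g n + fps_mul f (Lop g) n - Lop h n.
Proof. by rewrite Lop_sub Lop_mul. Qed.

Lemma main_assembly (Ap Phi : nat -> {poly rat}) :
  Ap 0%N = 0 -> Phi 0%N = 1 ->
  (forall n, Lop Ap n = Phi n - ('X * tt_) * Ap n) ->
  (forall n, Lop Phi n = (1 + 2%:R * 'X - 'X^2) * Phi n + tt_ ^+ 2 * delta n) ->
  forall n, fps_mul Ap den_fps n = num_fps n.
Proof.
move=> hA0 hP0 hA hP.
have hV : forall n, fps_mul Phi den_fps n - Mser n = 0.
  apply: (@Lop_zero (fun n => fps_mul Phi den_fps n - Mser n) ('X + 1)).
    by rewrite fps_mul0 hP0 den0 M0 mul1r subrr.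
  move=> n; rewrite Lop_fps_mul_sub Lop_M.
  rewrite (@fps_mul_ext _ (fun i => (1 + 2%:R * 'X - 'X^2) * Phi i + tt_ ^+ 2 * delta i) _ den_fps) //.
  rewrite (@fps_mul_ext Phi Phi _ (fun i => ('X * tt_) * den_fps i)) //; last by move=> i; rewrite Lop_den.
  rewrite fps_mulDl fps_mulCl fps_mulCl fps_mul_delta fps_mulCr /tt_; ring.
have hU : forall n, fps_mul Ap den_fps n - num_fps n = 0.
  apply: (@Lop_zero (fun n => fps_mul Ap den_fps n - num_fps n) 0).
    by rewrite fps_mul0 hA0 mul0r num0 subrr.
  move=> n; rewrite Lop_fps_mul_sub Lop_num mul0r.
  rewrite (@fps_mul_ext _ (fun i => Phi i - ('X * tt_) * Ap i) _ den_fps) //.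
  rewrite (@fps_mul_ext Ap Ap _ (fun i => ('X * tt_) * den_fps i)) //; last by move=> i; rewrite Lop_den.
  rewrite fps_mulBl fps_mulCl fps_mulCr.
  rewrite (subr0_eq (hV n)); ring.
by move=> n; apply: subr0_eq; apply: hU.
Qed.

Fixpoint istc (c : int) (w : seq int) : nat :=
  if w is d :: w' then ((c + d < 0)%R + istc d w')%N else 0%N.
Definition ist (v : seq int) : nat := if v is b :: v' then istc b v' else 0%N.
Definition ins (w : seq int) (k : nat) (e : int) := take k w ++ e :: drop k w.

Definition small (m : nat) (w : seq int) := all (fun a : int => (- Posz m < a) && (a < Posz m)) w.

Lemma ist_cons2 a b v : ist [:: a, b & v] = ((a + b < 0)%R + ist (b :: v))%N.
Proof. by []. Qed.

Lemma ins_cons a w k e : ins (a :: w) k.+1 e = a :: ins w k e.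
Proof. by []. Qed.

Lemma X1_deriv (s : nat) (e : bool) :
  ('X^(e + s) : {poly rat}) = (if e then 'X else 1) * 'X^s.
Proof. by case: e; rewrite ?add1n ?exprS ?add0n ?mul1r. Qed.

Lemma P3 m (w : seq int) (a : int) : small m (a :: w) ->
  \sum_(0 <= k < (size w).+1) ('X^(ist (ins (a :: w) k.+1 (Posz m))) + 'X^(ist (ins (a :: w) k.+1 (- Posz m))))
  = (1 + 'X) * 'X^(ist (a :: w)) +
    qq * ((1 - 'X) * ('X^(ist (a :: w)))^`() + (size w)%:R * 'X^(ist (a :: w))) :> {poly rat}.
Proof.
elim: w a => [|b w IH] a /=.
  rewrite andbT => /andP [h1 h2].
  rewrite big_nat1 /ins /= !addn0.
  have -> : (a + Posz m < 0) = false by apply/negbTE; rewrite -leNgt; lia.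
  have -> : (a + - Posz m < 0) = true by lia.
  rewrite expr0 -polyC1 derivC; rewrite /=; ring.
move=> /andP [ha hs].
have hsmall : small m (b :: w) by [].
have /andP [hb _] := hs.
rewrite big_nat_recl //.
rewrite (@eq_big_nat _ _ _ 0 (size w).+1 _ (fun k => 'X^((a + b < 0)%R : nat) *
    ('X^(ist (ins (b :: w) k.+1 (Posz m))) + 'X^(ist (ins (b :: w) k.+1 (- Posz m)))))); last first.
  by move=> k _ /=; rewrite !exprD mulrDr.
rewrite -mulr_sumr IH //.
rewrite /ins /=.
have -> : (a + Posz m < 0) = false by apply/negbTE; rewrite -leNgt; lia.
have -> : (Posz m + b < 0) = false by apply/negbTE; rewrite -leNgt; lia.
have -> : (a + - Posz m < 0) = true by lia.
have -> : (- Posz m + b < 0) = true by lia.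
rewrite !add0n !add1n X1_deriv.
set s := istc b w.
case: (a + b < 0)%R; rewrite /= ?expr1 ?mul1r ?derivM ?derivX /qq -?natr1 !exprS; ring.
Qed.

Definition kes (n : nat) : seq (nat * int) :=
  [seq (k, e) | k <- iota 0 n.+1, e <- [:: Posz n.+1; - Posz n.+1]].
Fixpoint gen (n : nat) : seq (seq int) :=
  if n is m.+1 then [seq ins w ke.1 ke.2 | w <- gen m, ke <- kes m] else [:: [::]].

Definition Fp (n : nat) : {poly rat} := \sum_(v <- gen n) 'X^(ist v).
Definition fE (v : seq int) : {poly rat} := if 0 < head 0 v then 'X^(ist v) else 0.
Definition Ep (n : nat) : {poly rat} := \sum_(v <- gen n) fE v.

Lemma gen_succ n : gen n.+1 = [seq ins w ke.1 ke.2 | w <- gen n, ke <- kes n].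
Proof. by []. Qed.

Lemma sum_gen (f : seq int -> {poly rat}) n :
  \sum_(v <- gen n.+1) f v =
  \sum_(w <- gen n) \sum_(0 <= k < n.+1) (f (ins w k (Posz n.+1)) + f (ins w k (- Posz n.+1))).
Proof.
rewrite gen_succ big_allpairs_dep; apply: eq_bigr => w _.
rewrite /kes big_allpairs_dep; apply: eq_bigr => k _.
by rewrite !big_cons big_nil /= addr0.
Qed.

Lemma perm_ins w k e : perm_eq (ins w k e) (e :: w).
Proof.
rewrite /ins -cat1s perm_catCA /= perm_cons cat_take_drop //.
Qed.

Lemma gen_prop n v : v \in gen n -> size v = n /\ small n.+1 v.
Proof.
elim: n v => [|n IH] v; first by rewrite inE => /eqP ->.
rewrite gen_succ.
case/allpairsP => [[w [k e]] /= [hw hke ->]].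
have [hs hsm] := IH w hw.
have he : (e == Posz n.+1) || (e == - Posz n.+1).
  move: hke; rewrite /kes => /allpairsP [[k' e'] /= [_ he' [_ ->]]].
  by move: he'; rewrite !inE.
split; first by rewrite (perm_size (perm_ins w k e)) /= hs.
rewrite /small (perm_all _ (perm_ins w k e)) /=; apply/andP; split.
  by case/orP: he => /eqP ->; lia.
apply/allP => a ha; move/allP: hsm => /(_ a ha); lia.
Qed.

Lemma tot_F m a w : small m (a :: w) ->
  \sum_(0 <= k < (size w).+2) ('X^(ist (ins (a :: w) k (Posz m))) + 'X^(ist (ins (a :: w) k (- Posz m))))
  = 2%:R * (1 + 'X) * 'X^(ist (a :: w)) +
    qq * ((1 - 'X) * ('X^(ist (a :: w)))^`() + (size w)%:R * 'X^(ist (a :: w))) :> {poly rat}.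
Proof.
move=> hs; have /andP [ha _] := hs.
rewrite big_nat_recl // P3 //.
rewrite /ins /= ?take0 ?drop0 /=.
have -> : (Posz m + a < 0) = false by apply/negbTE; rewrite -leNgt; lia.
have -> : (- Posz m + a < 0) = true by lia.
rewrite add0n add1n exprS; ring.
Qed.

Lemma tot_E m a w : small m (a :: w) -> (0 < m)%N ->
  \sum_(0 <= k < (size w).+2) (fE (ins (a :: w) k (Posz m)) + fE (ins (a :: w) k (- Posz m)))
  = 'X^(ist (a :: w)) + ((1 + 'X) * fE (a :: w) +
    qq * ((1 - 'X) * (fE (a :: w))^`() + (size w)%:R * fE (a :: w))).
Proof.
move=> hs hm; have /andP [ha _] := hs.
rewrite big_nat_recl //.
have -> : fE (ins (a :: w) 0 (Posz m)) = 'X^(ist (a :: w)).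
  rewrite /fE /ins /= ?take0 ?drop0 /=.
  have -> : (0 < Posz m) = true by lia.
  have -> : (Posz m + a < 0) = false by apply/negbTE; rewrite -leNgt; lia.
  by rewrite add0n.
have -> : fE (ins (a :: w) 0 (- Posz m)) = 0.
  rewrite /fE /ins /= ?take0 ?drop0 /=.
  by have -> : (0 < - Posz m) = false by apply/negbTE; rewrite -leNgt; lia.
rewrite addr0; congr (_ + _).
rewrite /fE /=; case: (0 < a) => /=.
  exact: (P3 hs).
rewrite big1 ?deriv0; first ring.
by move=> k _; rewrite addr0.
Qed.

Lemma sumL (r : seq (seq int)) (F : seq int -> {poly rat}) (a b c : {poly rat}) :
  \sum_(v <- r) (a * F v + b * ((1 - 'X) * (F v)^`() + c * F v)) =
  a * \sum_(v <- r) F v + b * ((1 - 'X) * (\sum_(v <- r) F v)^`() + c * \sum_(v <- r) F v).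
Proof.
elim: r => [|v r IH]; first by rewrite !big_nil deriv0; ring.
by rewrite !big_cons derivD IH; ring.
Qed.

Lemma Frec n : Fp n.+2 = 2%:R * (1 + 'X) * Fp n.+1 + qq * ((1 - 'X) * (Fp n.+1)^`() + n%:R * Fp n.+1).
Proof.
rewrite /Fp sum_gen -sumL; apply: eq_big_seq => w hw.
have [hsz hsm] := gen_prop hw.
case: w hsz hsm {hw} => [//|a w] [hsz] hsm.
subst n; exact: (tot_F hsm).
Qed.

Lemma Erec n : Ep n.+2 = Fp n.+1 + ((1 + 'X) * Ep n.+1 + qq * ((1 - 'X) * (Ep n.+1)^`() + n%:R * Ep n.+1)).
Proof.
rewrite /Ep /Fp sum_gen -sumL -big_split; apply: eq_big_seq => w hw.
have [hsz hsm] := gen_prop hw.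
case: w hsz hsm {hw} => [//|a w] [hsz] hsm.
subst n; exact: (tot_E hsm).
Qed.

Lemma Fp0 : Fp 0 = 1.
Proof. by rewrite /Fp /= big_cons big_nil addr0 expr0. Qed.
Lemma Ep0 : Ep 0 = 0.
Proof. by rewrite /Ep /= big_cons big_nil addr0 /fE /=. Qed.
Lemma Fp1 : Fp 1 = 2%:R.
Proof. by rewrite /Fp sum_gen big_cons big_nil addr0 big_nat1 /= expr0. Qed.
Lemma Ep1 : Ep 1 = 1.
Proof. by rewrite /Ep sum_gen big_cons big_nil addr0 big_nat1 /fE /= expr0 addr0. Qed.

Fixpoint altp (neg : bool) (w : seq int) : seq int :=
  if w is b :: w' then (if neg then - b else b) :: altp (~~ neg) w' else [::].

Fixpoint dh (a : int) (par : bool) (w : seq int) : nat :=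
  if w is b :: w' then ((if par then b < a else a < b)%R + dh b (~~ par) w')%N else 0%N.

Lemma dh_ist a par w : dh a par w = istc (if par then - a else a) (altp (~~ par) w).
Proof.
elim: w a par => [|b w IH] a par //=.
rewrite IH negbK; congr (_ + _)%N.
by case: par => /=; rewrite ?opprK; [rewrite addrC subr_lt0 | rewrite subr_lt0].
Qed.

Lemma count_dh a par w :
  count (fun i => if par (+) odd i then nth 0 (a :: w) i.+1 < nth 0 (a :: w) i
                  else nth 0 (a :: w) i < nth 0 (a :: w) i.+1) (iota 0 (size w)) = dh a par w.
Proof.
elim: w a par => [|b w IH] a par //=.
rewrite addbF; congr (_ + _)%N.
rewrite -(IH b (~~ par)) (iotaDl 1 0) count_map; apply: eq_count => i /=.
by rewrite addbN addNb.
Qed.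

Lemma dhatB_dh n (sg : signed_perm n) : dhatB sg = dh 0 false (sp_word sg).
Proof.
rewrite /dhatB -count_dh /sp_val.
have -> : size (sp_word sg) = n by rewrite /sp_word size_map size_enum_ord.
apply: eq_count => i /=.
by case: (odd i); rewrite ?andbT ?andbF ?orbF.
Qed.

Lemma term_eq n (sg : signed_perm n) :
  (if sp_val sg 1 < 0 then 'X^(dhatB sg) else 0) = fE (altp true (sp_word sg)).
Proof.
rewrite dhatB_dh /sp_val /fE.
case: (sp_word sg) => [|b w] //=.
rewrite oppr_gt0 dh_ist /=.
case hb: (b < 0) => //=.
by have -> : (0 < b) = false by lia.
Qed.

Definition is_sw n (v : seq int) :=
  [&& size v == n, uniq (map absz v) & all (fun a : int => (0 < absz a <= n)%N) v].

Lemma is_sw_gen n v : is_sw n v -> v \in gen n.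
Proof.
elim: n v => [|n IH] v.
  by case/and3P => /eqP /size0nil -> _ _; rewrite inE.
move=> hv; have /and3P [/eqP hsz hu hall] := hv.
have hhas : has (fun a : int => absz a == n.+1) v.
  apply/negPn/negP => hn.
  have : (size (map absz v) <= size (iota 1 n))%N.
    apply: uniq_leq_size hu _ => x /mapP [a ha ->].
    rewrite mem_iota.
    have h1 := allP hall a ha.
    have h2 : absz a != n.+1 by move/hasPn: hn => /(_ a ha).
    move: h1 h2 => /=; lia.
  by rewrite size_map size_iota hsz ltnn.
set k := find (fun a : int => absz a == n.+1) v.
have hk : (k < size v)%N by rewrite -has_find.
set e := nth 0 v k.
have he : absz e == n.+1 := nth_find 0 hhas.
set w := take k v ++ drop k.+1 v.
have hsk : size (take k v) = k by rewrite size_takel // ltnW.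
have hvw : v = ins w k e.
  by rewrite /ins /w take_size_cat // drop_size_cat // /e -drop_nth // cat_take_drop.
have hp := perm_ins w k e; rewrite -hvw in hp.
have hu' : uniq (map absz (e :: w)) by rewrite -(perm_uniq (perm_map absz hp)).
move: hu' => /= /andP [hnotin huw].
have hall' : all (fun a : int => (0 < absz a <= n.+1)%N) (e :: w) by rewrite -(perm_all _ hp).
have hw : is_sw n w.
  apply/and3P; split => //.
    by have := perm_size hp; rewrite hsz /= => -[->].
  apply/allP => a ha.
  have h1 : (0 < absz a <= n.+1)%N by apply: (allP hall'); rewrite inE ha orbT.
  have h2 : absz a != n.+1.
    apply/negP => /eqP ha'; move: hnotin; rewrite (eqP he) -ha'.
    by rewrite (map_f absz ha).
  move: h1 h2; lia.
have hke : (k, e) \in kes n.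
  apply: allpairs_f; first by rewrite mem_iota; lia.
  by rewrite !inE; move: he; lia.
rewrite hvw; suff : ins w k e \in gen n.+1 by []; rewrite gen_succ.
exact: (allpairs_f (fun w ke => ins w ke.1 ke.2) (IH w hw) hke).
Qed.

Lemma map_absz_altp b w : map absz (altp b w) = map absz w.
Proof. by elim: w b => [|a w IH] b //=; rewrite IH; case: b; rewrite ?abszN. Qed.

Lemma size_altp b w : size (altp b w) = size w.
Proof. by elim: w b => [|a w IH] b //=; rewrite IH. Qed.

Lemma all_altp b w (P : nat -> bool) : all (fun a => P (absz a)) (altp b w) = all (fun a => P (absz a)) w.
Proof. by elim: w b => [|a w IH] b //=; rewrite IH; case: b; rewrite ?abszN. Qed.

Lemma altpK b w : altp b (altp b w) = w.
Proof. by elim: w b => [|a w IH] b //=; rewrite IH; case: b; rewrite ?opprK. Qed.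

Lemma sp_word_absz n (sg : signed_perm n) :
  map absz (sp_word sg) = [seq (sg.1 i).+1 | i <- enum 'I_n].
Proof.
rewrite /sp_word -map_comp; apply: eq_map => i /=.
by case: (sg.2 i); rewrite ?abszN.
Qed.

Lemma is_sw_word n (sg : signed_perm n) : is_sw n (altp true (sp_word sg)).
Proof.
apply/and3P; split.
- by rewrite size_altp /sp_word size_map size_enum_ord.
- rewrite map_absz_altp sp_word_absz map_inj_uniq ?enum_uniq //.
  by move=> i j /= [] /val_inj /perm_inj.
- rewrite (all_altp true (sp_word sg) (fun k => (0 < k <= n)%N)).
  apply/allP => a /mapP [i _ ->] /=.
  by case: (sg.2 i); rewrite ?abszN /= ltn_ord.
Qed.

Lemma nth_map_enum (T : Type) n (f : 'I_n -> T) (x0 : T) (i : 'I_n) :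
  nth x0 [seq f i | i <- enum 'I_n] i = f i.
Proof. by rewrite (nth_map i) ?size_enum_ord // nth_ord_enum. Qed.

Lemma map_enum_eq (T : Type) n (f g : 'I_n -> T) (x0 : T) :
  [seq f i | i <- enum 'I_n] = [seq g i | i <- enum 'I_n] -> forall i, f i = g i.
Proof. by move=> E i; rewrite -(@nth_map_enum _ _ f x0 i) E nth_map_enum. Qed.

Lemma sp_word_inj n : injective (@sp_word n).
Proof.
move=> [p1 s1] [p2 s2] E.
have H i : p1 i = p2 i /\ s1 i = s2 i.
  have := @map_enum_eq int n _ _ 0 E i => /=.
  case: (s1 i); case: (s2 i) => h; [ | exfalso | exfalso | ]; try (move: h; lia); split => //; apply: val_inj; move: h; [move=> /oppr_inj | ]; by case.
congr (_, _); [apply/permP => i | apply/ffunP => i]; by case: (H i).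
Qed.

Lemma size_gen n : size (gen n) = (n`! * 2 ^ n)%N.
Proof.
elim: n => [|n IH] //.
rewrite gen_succ size_allpairs IH /kes size_allpairs size_iota factS expnS.
rewrite /=; ring.
Qed.

Lemma card_sp n : #|signed_perm n| = (n`! * 2 ^ n)%N.
Proof. by rewrite card_prod card_Sn card_ffun card_bool card_ord. Qed.

Lemma perm_gen n :
  perm_eq (map (fun sg => altp true (sp_word sg)) (enum (signed_perm n))) (gen n).
Proof.
set s1 := map _ _.
have hu : uniq s1.
  rewrite map_inj_uniq ?enum_uniq // => x y /= E.
  by apply: sp_word_inj; rewrite -(altpK true (sp_word x)) E altpK.
have hsub : {subset s1 <= gen n}.
  by move=> v /mapP [sg _ ->]; apply: is_sw_gen; apply: is_sw_word.
have hsz : (size (gen n) <= size s1)%N by rewrite size_map -cardE card_sp size_gen.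
apply: uniq_perm => //; first exact: (leq_size_uniq hu hsub hsz).
exact: (uniq_min_size hu hsub hsz).2.
Qed.

Lemma Bminus_Ep n : Bminus n = Ep n.
Proof.
rewrite /Bminus big_mkcond /=.
rewrite (eq_bigr (fun sg => fE (altp true (sp_word sg)))); last by move=> sg _; rewrite term_eq.
rewrite -big_enum -(big_map (fun sg => altp true (sp_word sg)) xpredT fE).
by rewrite /Ep; apply: perm_big; apply: perm_gen.
Qed.

Definition kap (n : nat) : {poly rat} := ((n`!%:R)^-1 : rat)%:P.

Lemma kS n : n.+1%:R * kap n.+1 = kap n.
Proof.
rewrite /kap -polyC_natr -polyCM; congr polyC.
rewrite factS natrM; field.
by rewrite fact_neq0 nat1r pnatr_eq0.
Qed.

Lemma kap0 : kap 0 = 1.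
Proof. by rewrite /kap fact0 invr1. Qed.

Lemma egf_eq n : egfBminus n = kap n * Ep n.
Proof.
case: n => [|n]; first by rewrite Ep0 mulr0.
by rewrite /egfBminus Bminus_Ep /kap mul_polyC.
Qed.

Lemma Lop_kap G n : Lop (fun i => kap i * G i) n =
  kap n * (G n.+1 - qq * (n%:R * G n - tt_ * (G n)^`())).
Proof. rewrite /Lop /kap deriv_mulC -/(kap n) -/(kap n.+1) -(kS n); ring. Qed.

Theorem mainTheorem8 :
  forall n : nat, fps_mul egfBminus den_fps n = num_fps n.
Proof.
apply: (@main_assembly _ (fun i => kap i * Fp i)).
- by [].
- by rewrite kap0 Fp0 mulr1.
- move=> n; rewrite (@Lop_ext _ (fun i => kap i * Ep i)); last by move=> i; rewrite egf_eq.
  rewrite Lop_kap egf_eq.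
  case: n => [|n].
    by rewrite Ep1 Ep0 Fp0 kap0 deriv0 /qq /tt_; ring.
  by rewrite Erec -natr1 /qq /tt_; ring.
- move=> n; rewrite Lop_kap /delta.
  case: n => [|n].
    by rewrite Fp1 Fp0 kap0 -polyC1 derivC /qq /tt_ /=; ring.
  by rewrite Frec -natr1 /qq /tt_ /=; ring.
Qed.
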